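(* For any persuasive signaling scheme $\varphi$, there exists an identity-independent signaling scheme $\widetilde{\varphi}$ that is persuasive and has $\mathrm{Cost}(\widetilde{\varphi})=\mathrm{Cost}(\varphi)$.
   Context: Setting. $V$ is a finite set of $n$ task types and $W=(W_{u,v})_{u,v\in V}$ is a symmetric matrix with entries in $[0,1]$ and $W_{v,v}=1$. There are $n$ agents; the type profile $t=(t_1,\dots,t_n)$ is a uniformly random bijection $[n]\to V$. A signaling scheme with finite signal space $\Sigma\subset[0,1]$ is a map $\varphi$ assigning to each bijection $t$ a distribution $\varphi(t)$ on $\Sigma^V$; given $t$, $s=(s_v)_{v\in V}\sim\varphi(t)$ is drawn and agent $i$ privately receives $s_{t_i}$. For agent $i$, a signal $\theta\in\Sigma$ with $\Pr[s_{t_i}=\theta]>0$ and $x\ge0$, let $Q_i(x\mid\theta)=\mathbb{E}\big[x+\sum_{v'\neq t_i}W_{t_i,v'}s_{v'}\,\big|\,s_{t_i}=\theta\big]$ (over the joint law of $t,s$). The scheme is persuasive if for every agent $i$ and every such $\theta$: $Q_i(\theta\mid\theta)\ge1$ and $\theta=\min\{x\ge0:Q_i(x\mid\theta)\ge1\}$. $\mathrm{Cost}(\varphi)=\mathbb{E}_{t,\,s\sim\varphi(t)}[\|s\|_1]$. The scheme is identity-independent if there is a distribution $\mathcal{D}_\varphi$ on $\Sigma^V$ with $\varphi(t)=\mathcal{D}_\varphi$ for every bijection $t$. *)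

(* Defs.v *)
From mathcomp Require Import all_boot all_order all_algebra.
From mathcomp Require Import reals.
Set Implicit Arguments. Unset Strict Implicit. Unset Printing Implicit Defensive.
Import Order.TTheory GRing.Theory Num.Theory.
Local Open Scope ring_scope.

Section Signaling.
Variables (R : realType) (V : finType).

(* agents are 'I_n with n = #|V|; a type profile is a map agents -> types *)
Definition profile := {ffun 'I_#|V| -> V}.

(* the bijections [n] -> V; the type profile is uniform over this set *)
Definition bijs : {set profile} := [set t : profile | injectiveb t].

Definition valid_W (W : V -> V -> R) : Prop :=
  (forall u v, W u v = W v u) /\ (forall u v, 0 <= W u v <= 1) /\
  (forall v, W v v = 1).

Variable (S : finType).
(* A signaling scheme with finite signal space Sigma = image of sigma in [0,1]:
   phi t s = probability of the signal vector (fun v => sigma (s v)) given t. *)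
Definition is_distr (D : {ffun V -> S} -> R) : Prop :=
  (forall s, 0 <= D s) /\ \sum_(s : {ffun V -> S}) D s = 1.

Definition is_scheme (sigma : S -> R) (phi : profile -> {ffun V -> S} -> R) : Prop :=
  (forall a, 0 <= sigma a <= 1) /\ (forall t, t \in bijs -> is_distr (phi t)).

Definition identity_independent (phi : profile -> {ffun V -> S} -> R) : Prop :=
  exists D : {ffun V -> S} -> R, is_distr D /\
    forall t, t \in bijs -> forall s, phi t s = D s.

Variables (W : V -> V -> R) (sigma : S -> R) (phi : profile -> {ffun V -> S} -> R).

Definition joint (t : profile) (s : {ffun V -> S}) : R :=
  phi t s / #|bijs|%:R.

Definition prob_sig (i : 'I_#|V|) (theta : R) : R :=
  \sum_(t in bijs) \sum_(s : {ffun V -> S}) (sigma (s (t i)) == theta)%:R * joint t s.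

Definition Q (i : 'I_#|V|) (x theta : R) : R :=
  (\sum_(t in bijs) \sum_(s : {ffun V -> S}) (sigma (s (t i)) == theta)%:R * joint t s *
      (x + \sum_(v' | v' != t i) W (t i) v' * sigma (s v'))) / prob_sig i theta.

Definition persuasive : Prop :=
  forall (i : 'I_#|V|) (theta : R), 0 < prob_sig i theta ->
    1 <= Q i theta theta /\
    (* theta = min { x >= 0 : Q_i(x|theta) >= 1 } *)
    0 <= theta /\ (forall x, 0 <= x -> 1 <= Q i x theta -> theta <= x).

Definition cost : R :=
  \sum_(t in bijs) \sum_(s : {ffun V -> S}) joint t s * \sum_v `|sigma (s v)|.

End Signaling.

(* Main.v *)
Require Import Defs.
From mathcomp Require Import all_boot all_order all_algebra all_fingroup.
From mathcomp Require Import reals ring lra.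
Set Implicit Arguments. Unset Strict Implicit. Unset Printing Implicit Defensive.
Import Order.TTheory GRing.Theory Num.Theory.
Local Open Scope ring_scope.

Section Aux.
Variables (R : realType) (V : finType).

Definition swp (i j : 'I_#|V|) (t : profile V) : profile V :=
  [ffun k => t (tperm i j k)].

Lemma swpK i j : involutive (swp i j).
Proof. by move=> t; apply/ffunP=> k; rewrite !ffunE tpermK. Qed.

Lemma swp_bij i j t : (swp i j t \in bijs V) = (t \in bijs V).
Proof.
suff H : forall t, t \in bijs V -> swp i j t \in bijs V.
  apply/idP/idP => [/H|/H //]; by rewrite swpK.
move=> t'; rewrite !inE => /injectiveP It; apply/injectiveP => a b.
rewrite !ffunE => /It; exact: perm_inj.
Qed.

Lemma sum_bijs_at (g : V -> R) (i j : 'I_#|V|) :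
  \sum_(t in bijs V) g (t i) = \sum_(t in bijs V) g (t j).
Proof.
rewrite (reindex_inj (inv_inj (swpK i j))) /=.
apply: eq_big => [t|t _]; first by rewrite swp_bij.
by rewrite ffunE tpermL.
Qed.

Lemma sum_inj (g : V -> R) (t : profile V) : t \in bijs V ->
  \sum_j g (t j) = \sum_v g v.
Proof.
rewrite inE => /injectiveP It.
have /onW_bij Bt : bijective t by apply: inj_card_bij It _; rewrite card_ord.
by rewrite [RHS](reindex _ (Bt xpredT)).
Qed.

Lemma bijs_card : (0 < #|bijs V|)%N.
Proof.
apply/card_gt0P; exists [ffun k : 'I_#|V| => (enum_val k : V)].
rewrite inE; apply/injectiveP => a b; rewrite !ffunE; exact: enum_val_inj.
Qed.

Lemma sum_bijs_avg (g : V -> R) (i : 'I_#|V|) :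
  #|V|%:R * \sum_(t in bijs V) g (t i) = #|bijs V|%:R * \sum_v g v.
Proof.
transitivity (\sum_(j < #|V|) \sum_(t in bijs V) g (t j)).
  by rewrite (eq_bigr _ (fun j _ => sum_bijs_at g j i)) sumr_const card_ord mulr_natl.
rewrite exchange_big /= (eq_bigr _ (fun t Ht => sum_inj g Ht)).
by rewrite sumr_const mulr_natl.
Qed.
End Aux.

Section Main.
Variables (R : realType) (V S : finType) (sigma : S -> R)
  (phi : profile V -> {ffun V -> S} -> R).

Let NB : R := #|bijs V|%:R.

Lemma NB_gt0 : 0 < NB.
Proof. by rewrite /NB ltr0n bijs_card. Qed.

Definition Dav (s : {ffun V -> S}) : R := (\sum_(u in bijs V) phi u s) / NB.
Definition phi' : profile V -> {ffun V -> S} -> R := fun _ s => Dav s.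

Definition Hs (ph : profile V -> {ffun V -> S} -> R) i th
  (F : V -> {ffun V -> S} -> R) :=
  \sum_(t in bijs V) \sum_(s : {ffun V -> S}) (sigma (s (t i)) == th)%:R * joint ph t s * F (t i) s.

Lemma Hs_avg i th F : #|V|%:R * Hs phi' i th F = \sum_(j < #|V|) Hs phi j th F.
Proof.
pose G := fun (s : {ffun V -> S}) v => (sigma (s v) == th)%:R * F v s.
have NB0 : NB != 0 by rewrite gt_eqF // NB_gt0.
transitivity (\sum_s Dav s * \sum_v G s v).
  rewrite /Hs exchange_big mulr_sumr; apply: eq_bigr => s _.
  have E : forall t : profile V, (sigma (s (t i)) == th)%:R * joint phi' t s * F (t i) s
                     = Dav s / NB * G s (t i).
    by move=> t; rewrite /joint /phi' /G -mulrA mulrCA.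
  rewrite (eq_bigr _ (fun t _ => E t)) -mulr_sumr mulrCA sum_bijs_avg.
  by rewrite mulrA divfK.
rewrite /Hs exchange_big /=.
have E1 : forall u, u \in bijs V ->
  \sum_(j < #|V|) \sum_(s : {ffun V -> S})
     (sigma (s (u j)) == th)%:R * joint phi u s * F (u j) s
  = \sum_s phi u s / NB * \sum_v G s v.
  move=> u Hu; rewrite exchange_big /=; apply: eq_bigr => s _.
  have E : forall j, (sigma (s (u j)) == th)%:R * joint phi u s * F (u j) s
                     = phi u s / NB * G s (u j).
    by move=> j; rewrite /joint /G -mulrA mulrCA.
  by rewrite (eq_bigr _ (fun j _ => E j)) -mulr_sumr (sum_inj _ Hu).
rewrite (eq_bigr _ E1) exchange_big /=; apply: eq_bigr => s _.
by rewrite /Dav !mulr_suml.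
Qed.

Definition one : V -> {ffun V -> S} -> R := fun _ _ => 1.
Definition Fx (W : V -> V -> R) (x : R) : V -> {ffun V -> S} -> R :=
  fun v s => x + \sum_(v' | v' != v) W v v' * sigma (s v').

Lemma prob_sigE ph i th : prob_sig sigma ph i th = Hs ph i th one.
Proof.
rewrite /prob_sig /Hs; apply: eq_bigr => t _; apply: eq_bigr => s _.
by rewrite /one mulr1.
Qed.

Lemma QE W ph i x th :
  Q W sigma ph i x th = Hs ph i th (Fx W x) / prob_sig sigma ph i th.
Proof. by []. Qed.

Hypothesis hpos : forall t, t \in bijs V -> forall s, 0 <= phi t s.

Lemma term_ge0 (t : profile V) (s : {ffun V -> S}) i th : t \in bijs V ->
  0 <= (sigma (s (t i)) == th)%:R * joint phi t s.
Proof.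
move=> Ht; apply: mulr_ge0; first by rewrite ler0n.
by rewrite /joint divr_ge0 // ?hpos // ler0n.
Qed.

Lemma Hs_ge0 i th : 0 <= Hs phi i th one.
Proof.
apply: sumr_ge0 => t Ht; apply: sumr_ge0 => s _.
by rewrite /one mulr1 term_ge0.
Qed.

Lemma Hs_zero i th F : Hs phi i th one = 0 -> Hs phi i th F = 0.
Proof.
move=> H0.
have Hin : forall t, t \in bijs V -> forall s : {ffun V -> S},
   0 <= (sigma (s (t i)) == th)%:R * joint phi t s * one (t i) s.
  by move=> t Ht s; rewrite /one mulr1 term_ge0.
have H1 := psumr_eq0P (fun t Ht => sumr_ge0 _ (fun s _ => Hin t Ht s)) H0.
apply: big1 => t Ht; apply: big1 => s _.
have H2 := psumr_eq0P (fun s _ => Hin t Ht s) (H1 t Ht).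
by have := H2 s isT; rewrite /one mulr1 => ->; rewrite mul0r.
Qed.

Lemma pers' W : persuasive W sigma phi -> persuasive W sigma phi'.
Proof.
move=> HP i th.
have n0 : (0 < #|V|)%N by apply: leq_ltn_trans (leq0n i) (ltn_ord i).
have nR : (0 : R) < #|V|%:R by rewrite ltr0n.
have nR0 : (#|V|%:R : R) != 0 by rewrite gt_eqF.
have PE : prob_sig sigma phi' i th = (\sum_(j < #|V|) Hs phi j th one) / #|V|%:R.
  by rewrite prob_sigE -(Hs_avg i) mulrAC divff // mul1r.
have NE x : Hs phi' i th (Fx W x) = (\sum_(j < #|V|) Hs phi j th (Fx W x)) / #|V|%:R.
  by rewrite -(Hs_avg i) mulrAC divff // mul1r.
have QE' x : Q W sigma phi' i x th =
   (\sum_(j < #|V|) Hs phi j th (Fx W x)) / (\sum_(j < #|V|) Hs phi j th one).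
  by rewrite QE NE PE invf_div mulrA divfK.
move=> hP'.
have sP : 0 < \sum_(j < #|V|) Hs phi j th one.
  by move: hP'; rewrite PE pmulr_lgt0 // invr_gt0.
have [j0 Pj0] : exists j, 0 < Hs phi j th one.
  case: (pickP (fun j => 0 < Hs phi j th one)) => [j Hj|H]; first by exists j.
  exfalso; suff : \sum_(j < #|V|) Hs phi j th one <= 0 by rewrite leNgt sP.
  by apply: sumr_le0 => j _; rewrite leNgt H.
have HPj j : 0 < Hs phi j th one -> 0 < prob_sig sigma phi j th by rewrite prob_sigE.
have cases j : Hs phi j th one = 0 \/ 0 < Hs phi j th one.
  by have := Hs_ge0 j th; rewrite le_eqVlt => /orP [/eqP <-|->]; [left|right].
split.
  rewrite QE' ler_pdivlMr // mul1r; apply: ler_sum => j _.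
  case: (cases j) => [P0|Pp].
    by rewrite P0 Hs_zero.
  have [h1 _] := HP j th (HPj j Pp).
  by move: h1; rewrite QE prob_sigE ler_pdivlMr // mul1r.
split; first by have [_ [h2 _]] := HP j0 th (HPj j0 Pj0).
move=> x x0 Hx; rewrite leNgt; apply/negP => xlt.
have lt j : 0 < Hs phi j th one -> Hs phi j th (Fx W x) < Hs phi j th one.
  move=> Pp; have [_ [_ h3]] := HP j th (HPj j Pp).
  rewrite ltNge; apply/negP => le.
  have := h3 x x0; rewrite QE prob_sigE ler_pdivlMr // mul1r => /(_ le).
  by rewrite leNgt xlt.
have : \sum_(j < #|V|) Hs phi j th (Fx W x) < \sum_(j < #|V|) Hs phi j th one.
  rewrite (bigD1 j0) //= [X in _ < X](bigD1 j0) //=.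
  apply: ltr_leD (lt j0 Pj0) _; apply: ler_sum => j _.
  case: (cases j) => [P0|Pp]; first by rewrite P0 Hs_zero.
  exact: ltW (lt j Pp).
by move: Hx; rewrite QE' ler_pdivlMr // mul1r leNgt => /negP.
Qed.

Lemma cost_eq : cost sigma phi' = cost sigma phi.
Proof.
have NB0 : NB != 0 by rewrite gt_eqF // NB_gt0.
rewrite /cost /joint /phi' sumr_const -(mulr_natl (\sum_s _)) -/NB mulr_sumr.
under eq_bigr => s _ do rewrite mulrA mulrCA divff // mulr1 /Dav mulr_suml mulr_suml.
by rewrite exchange_big.
Qed.

Hypothesis hsum : forall t, t \in bijs V -> \sum_s phi t s = 1.

Lemma Dav_distr : is_distr Dav.
Proof.
have NB0 : NB != 0 by rewrite gt_eqF // NB_gt0.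
split.
  by move=> s; rewrite /Dav divr_ge0 ?ler0n // sumr_ge0 // => t Ht; apply: hpos.
rewrite /Dav -mulr_suml exchange_big /= (eq_bigr _ hsum) sumr_const -mulr_natl -/NB.
by rewrite mulr1 divff.
Qed.

End Main.

Theorem lemma2p1 (R : realType) (V : finType) (W : V -> V -> R)
  (hW : valid_W W) (S : finType) (sigma : S -> R)
  (phi : profile V -> {ffun V -> S} -> R) :
  is_scheme sigma phi -> persuasive W sigma phi ->
  exists (S' : finType) (sigma' : S' -> R)
         (phi' : profile V -> {ffun V -> S'} -> R),
    [/\ is_scheme sigma' phi', identity_independent phi',
        persuasive W sigma' phi' & cost sigma' phi' = cost sigma phi].
Proof.
move=> [hsig hdist] HP.
have hpos : forall t, t \in bijs V -> forall s, 0 <= phi t s.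
  by move=> t Ht; case: (hdist t Ht).
have hsum : forall t, t \in bijs V -> \sum_s phi t s = 1.
  by move=> t Ht; case: (hdist t Ht).
exists S, sigma, (phi' phi); split.
- by split => // t _; apply: Dav_distr.
- exists (Dav phi); split; first exact: Dav_distr.
  by [].
- exact: pers'.
- exact: cost_eq.
Qed.
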